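(* Let $n\ge1$, $y\in\mathbb{R}^n$, $\lambda\ge0$, and let $\hat\theta^{(\lambda)}=\operatorname{argmin}_{\theta\in\mathbb{R}^n}\frac12\sum_{i=1}^n(y_i-\theta_i)^2+\lambda\sum_{i=1}^{n-1}|\theta_{i+1}-\theta_i|$ be the Fused Lasso estimator. Then $$\max_{j\le n}\ \min_{j\le i\le n}\Big[\overline{y}_{[i:n]}+\frac{C_{i,j}\lambda}{n-i+1}\Big]\le\hat\theta^{(\lambda)}_n\le\min_{j\le n}\ \max_{j\le i\le n}\Big[\overline{y}_{[i:n]}-\frac{C_{i,j}\lambda}{n-i+1}\Big],$$ where $j,i$ range over $[n]$, $C_{i,j}=1$ if $i>j$ and $C_{i,j}=-1$ if $i=j$.
   Context: $[n]=\{1,\dots,n\}$, $[i:n]=\{i,\dots,n\}$, and $\overline{y}_{[i:n]}$ is the average of $y_i,\dots,y_n$. *)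

(* Defs.v *)
(* Vectors in R^N with N = n.+1 >= 1 are functions 'I_n.+1 -> R,
   indexed 0-based: paper index k (1-based) corresponds to ordinal k-1. *)
From mathcomp Require Import all_boot all_order all_algebra.
Set Implicit Arguments. Unset Strict Implicit. Unset Printing Implicit Defensive.
Import Order.TTheory GRing.Theory Num.Theory.
Local Open Scope ring_scope.

(* Fused Lasso objective:
   1/2 sum_k (y_k - th_k)^2 + lam * sum_{k=1}^{N-1} |th_{k+1} - th_k|.
   For k : 'I_n, lift ord0 k has value k+1 and widen_ord _ k has value k. *)
Definition fl_obj (R : realFieldType) (n : nat) (lam : R)
  (y th : 'I_n.+1 -> R) : R :=
  2^-1 * \sum_(k < n.+1) (y k - th k) ^+ 2
  + lam * \sum_(k < n) `|th (lift ord0 k) - th (widen_ord (leqnSn n) k)|.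

Definition fl_argmin (R : realFieldType) (n : nat) (lam : R)
  (y th : 'I_n.+1 -> R) : Prop :=
  forall th' : 'I_n.+1 -> R, fl_obj lam y th <= fl_obj lam y th'.

(* average of y over the tail [i : N] (0-based: indices i..n, n.+1 - i terms) *)
Definition tail_avg (R : realFieldType) (n : nat) (y : 'I_n.+1 -> R)
  (i : 'I_n.+1) : R :=
  (\sum_(k < n.+1 | (i <= k)%N) y k) / (n.+1 - i)%:R.

(* C_{i,j} = 1 if i > j, -1 if i = j (only used for i >= j) *)
Definition Cij (R : realFieldType) (n : nat) (i j : 'I_n.+1) : R :=
  if (j < i)%N then 1 else -1.

(* maximum of F over all of 'I_n.+1 (seed F ord0 is an element of the range) *)
Definition max_all (R : realFieldType) (n : nat) (F : 'I_n.+1 -> R) : R :=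
  \big[Num.max/F ord0]_(j < n.+1) F j.
Definition min_all (R : realFieldType) (n : nat) (F : 'I_n.+1 -> R) : R :=
  \big[Num.min/F ord0]_(j < n.+1) F j.

(* max / min of F over {i | j <= i} (seed F j is an element of the range) *)
Definition max_from (R : realFieldType) (n : nat) (j : 'I_n.+1)
  (F : 'I_n.+1 -> R) : R :=
  \big[Num.max/F j]_(i < n.+1 | (j <= i)%N) F i.
Definition min_from (R : realFieldType) (n : nat) (j : 'I_n.+1)
  (F : 'I_n.+1 -> R) : R :=
  \big[Num.min/F j]_(i < n.+1 | (j <= i)%N) F i.
Arguments Cij {R n} i j.

(* Main.v *)
Require Import Defs.
From mathcomp Require Import all_boot all_order all_algebra.
From mathcomp Require Import ring lra.
Set Implicit Arguments. Unset Strict Implicit. Unset Printing Implicit Defensive.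
Import Order.TTheory GRing.Theory Num.Theory.
Local Open Scope ring_scope.

Section H.
Variable R : realFieldType.

Lemma bigmin_le (T : eqType) (r : seq T) (P : pred T) (F : T -> R) x0 i :
  i \in r -> P i -> \big[Num.min/x0]_(k <- r | P k) F k <= F i.
Proof.
elim: r => // a r IH; rewrite inE big_cons => /orP [/eqP<- | ir] Pi.
  by rewrite Pi ge_min lexx.
case: (P a); last exact: IH.
by rewrite ge_min IH ?orbT.
Qed.

Lemma bigmax_ge (T : eqType) (r : seq T) (P : pred T) (F : T -> R) x0 i :
  i \in r -> P i -> F i <= \big[Num.max/x0]_(k <- r | P k) F k.
Proof.
elim: r => // a r IH; rewrite inE big_cons => /orP [/eqP<- | ir] Pi.
  by rewrite Pi le_max lexx.
case: (P a); last exact: IH.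
by rewrite le_max IH ?orbT.
Qed.

Lemma max_all_le n (F : 'I_n.+1 -> R) c : (forall j, F j <= c) -> max_all F <= c.
Proof.
move=> H; rewrite /max_all; elim/big_ind: _ => //.
by move=> x z hx hz; rewrite ge_max hx hz.
Qed.

Lemma min_all_ge n (F : 'I_n.+1 -> R) c : (forall j, c <= F j) -> c <= min_all F.
Proof.
move=> H; rewrite /min_all; elim/big_ind: _ => //.
by move=> x z hx hz; rewrite le_min hx hz.
Qed.

Lemma small_t (S c g M : R) : 0 < g -> 0 <= M ->
  (forall t, 0 < t -> t <= g -> S <= t * M + c) -> S <= c.
Proof.
move=> g0 M0 H; rewrite leNgt; apply/negP => Sc.
pose e := (S - c) / (2 * (M + 1)).
have e0 : 0 < e by rewrite /e divr_gt0 // ?subr_gt0 //; lra.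
have he : e * (2 * (M + 1)) = S - c by rewrite /e mulfVK //; lra.
have t0 : 0 < Num.min g e by rewrite lt_min g0 e0.
have := H _ t0 (ltac:(by rewrite ge_min lexx)) => /=.
have : Num.min g e <= e by rewrite ge_min lexx orbT.
move: t0; set t := Num.min g e => t0 te.
have : t * M <= e * M by rewrite ler_wpM2r.
nra.
Qed.

Variables (n : nat) (y th : 'I_n.+1 -> R) (lam : R).

Definition pert (i : 'I_n.+1) t : 'I_n.+1 -> R :=
  fun k => th k + (if (i <= k)%N then t else 0).
Definition aa (z : 'I_n.+1 -> R) (k : 'I_n) :=
  z (lift ord0 k) - z (widen_ord (leqnSn n) k).
Definition SS (i : 'I_n.+1) := \sum_(k < n.+1 | (i <= k)%N) (y k - th k).

Lemma sum_const_from (i : 'I_n.+1) (c : R) :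
  \sum_(k < n.+1 | (i <= k)%N) c = c *+ (n.+1 - i).
Proof.
by rewrite -sumr_const_nat big_geq_mkord.
Qed.

Lemma quad_diff i t :
  \sum_(k < n.+1) (y k - pert i t k) ^+ 2 =
  \sum_(k < n.+1) (y k - th k) ^+ 2 + (t ^+ 2 *+ (n.+1 - i) - 2 * t * SS i).
Proof.
rewrite -sum_const_from /SS mulr_sumr -sumrB big_mkcond [X in _ + X]big_mkcond.
rewrite -big_split /=; apply: eq_bigr => k _; rewrite /pert.
case: ifP => _ /=; ring.
Qed.

Lemma tv_diff i t :
  \sum_(k < n) `|aa (pert i t) k| =
  \sum_(k < n) `|aa th k| + \sum_(k < n) (if (k.+1 == i)%N then `|aa th k + t| - `|aa th k| else 0).
Proof.
rewrite -big_split /=; apply: eq_bigr => k _; rewrite /aa /pert /=.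
case: eqP => [<-|ne].
  by rewrite leqnn ltnn addr0 addrC subrK addrAC.
rewrite /bump /= add1n leq_eqVlt ltnS.
have -> : (i == k.+1 :> nat) = false by apply/eqP => E; apply: ne.
by rewrite /= addr0; congr (Num.norm _); case: ifP => _; ring.
Qed.

Lemma dsum0 i (G : 'I_n -> R) : (forall k : 'I_n, (k.+1 != i)%N) ->
  \sum_(k < n) (if (k.+1 == i)%N then G k else 0) = 0.
Proof. by move=> H; apply: big1 => k _; rewrite (negbTE (H k)). Qed.

Lemma dsum1 (i : 'I_n.+1) (k0 : 'I_n) (G : 'I_n -> R) : k0.+1 = i ->
  \sum_(k < n) (if (k.+1 == i)%N then G k else 0) = G k0.
Proof.
move=> E; rewrite -big_mkcond; apply: big_pred1 => k /=.
by rewrite -E eqSS.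
Qed.

Definition Dd (i : 'I_n.+1) (t : R) := \sum_(k < n) (if (k.+1 == i)%N then `|aa th k + t| - `|aa th k| else 0).

Lemma key (i : 'I_n.+1) (t : R) : fl_argmin lam y th ->
  0 <= 2^-1 * (t ^+ 2 *+ (n.+1 - i) - 2 * t * SS i) + lam * Dd i t.
Proof.
move=> H; have := H (pert i t); rewrite /fl_obj quad_diff.
have -> : \sum_(k < n) `|pert i t (lift ord0 k) - pert i t (widen_ord (leqnSn n) k)|
   = \sum_(k < n) `|aa (pert i t) k| by [].
rewrite tv_diff -/(Dd i t) /aa.
set A := \sum_(k < n.+1) _; set B := \sum_(k < n) _.
rewrite -subr_ge0 => h; apply: le_trans h _; rewrite le_eqVlt; apply/orP; left; apply/eqP; ring.
Qed.

Lemma corA (i : 'I_n.+1) : 0 <= lam -> fl_argmin lam y th -> SS i <= lam.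
Proof.
move=> l0 H; apply: (@small_t _ _ 1 (n.+1 - i)%:R) => // t t0 _.
have hk := key i t H.
have hD : Dd i t <= t.
  case: (boolP [exists k : 'I_n, (k.+1 == i)%N]).
    case/existsP => k0 /eqP E; rewrite /Dd (dsum1 _ E).
    have := ler_normD (aa th k0) t; rewrite (gtr0_norm t0); lra.
  rewrite negb_exists => /forallP hn; rewrite /Dd dsum0; [exact: ltW | by []].
have hlD : lam * Dd i t <= lam * t by rewrite ler_wpM2l.
rewrite -(ler_pM2l t0).
move: hk; rewrite -mulr_natr.
have m0 : 0 <= (n.+1 - i)%:R :> R by [].
nra.
Qed.

Lemma corB (i : 'I_n.+1) (k0 : 'I_n) : fl_argmin lam y th -> k0.+1 = i ->
  aa th k0 < 0 -> SS i <= - lam.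
Proof.
move=> H E a0; apply: (@small_t _ _ (- aa th k0) (n.+1 - i)%:R).
- by rewrite oppr_gt0.
- by [].
move=> t t0 tg.
have hk := key i t H.
have hD : Dd i t = - t.
  rewrite /Dd (dsum1 _ E) (ltr0_norm a0) ler0_norm; first ring.
  lra.
rewrite hD in hk; rewrite -(ler_pM2l t0).
move: hk; rewrite -mulr_natr.
have m0 : 0 <= (n.+1 - i)%:R :> R by [].
nra.
Qed.
End H.

Lemma finish (R : realFieldType) n (y th : 'I_n.+1 -> R) lam (i j : 'I_n.+1) :
  (forall k : 'I_n.+1, (i <= k)%N -> th k <= th ord_max) ->
  SS y th i <= - (Cij i j * lam) ->
  tail_avg y i + Cij i j * lam / (n.+1 - i)%:R <= th ord_max.
Proof.
move=> hk hS.
have m0 : 0 < (n.+1 - i)%:R :> R by rewrite ltr0n subn_gt0.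
rewrite /tail_avg -mulrDl ler_pdivrMr //.
have : \sum_(k < n.+1 | (i <= k)%N) th k <= \sum_(k < n.+1 | (i <= k)%N) th ord_max.
  by apply: ler_sum => k; apply: hk.
rewrite sum_const_from -mulr_natr.
move: hS; rewrite /SS sumrB; lra.
Qed.

Lemma lower (R : realFieldType) n (y th : 'I_n.+1 -> R) lam :
  0 <= lam -> fl_argmin lam y th -> forall j : 'I_n.+1,
  exists2 i : 'I_n.+1, (j <= i)%N &
    tail_avg y i + Cij i j * lam / (n.+1 - i)%:R <= th ord_max.
Proof.
move=> l0 H j.
pose P := fun m => (j <= m)%N && [forall k : 'I_n.+1, (m <= k)%N ==> (th k <= th ord_max)].
have Pn : P n.
  rewrite /P -ltnS ltn_ord /=; apply/forallP => k; apply/implyP => nk.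
  have -> : k = ord_max by apply: val_inj => /=; apply/eqP; rewrite eqn_leq nk -ltnS ltn_ord.
  exact: lexx.
have exP : exists m, P m by exists n.
case: (ex_minnP exP) => m /andP [jm /forallP Pm] mmin.
have mn : (m < n.+1)%N by rewrite ltnS; apply: mmin.
pose i := Ordinal mn.
have hk : forall k : 'I_n.+1, (i <= k)%N -> th k <= th ord_max.
  by move=> k ik; apply: (implyP (Pm k)).
exists i => //.
apply: finish => //.
case: (ltngtP j m) => [jlm | mlj | ejm].
- have Cv : Cij i j = 1 :> R by rewrite /Cij /= jlm.
  rewrite Cv mul1r.
  have m0 : (0 < m)%N by apply: leq_ltn_trans jlm.
  have nP : ~~ P m.-1.
    apply/negP => /mmin; rewrite leqNgt; move/negP; apply; by rewrite prednK // ?ltnSn // prednK.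
  have jm1 : (j <= m.-1)%N by rewrite -ltnS prednK.
  move: nP; rewrite /P jm1 /= negb_forall => /existsP [k]; rewrite negb_imply => /andP [mk thk].
  have ek : nat_of_ord k = m.-1.
    apply/eqP; rewrite eqn_leq mk andbT leqNgt; apply/negP => /= km.
    move: thk; rewrite (implyP (Pm k)) //.
    by rewrite -(prednK m0).
  have k0n : (m.-1 < n)%N by rewrite -ltnS prednK.
  pose k0 := Ordinal k0n.
  apply: (@corB _ _ y th lam i k0 H) => /=; first by rewrite prednK.
  rewrite /aa.
  have -> : lift ord0 k0 = i by apply: val_inj; rewrite /= /bump /= add1n prednK.
  have -> : widen_ord (leqnSn n) k0 = k by apply: val_inj; rewrite /= ek.
  rewrite subr_lt0; apply: le_lt_trans (hk i (leqnn _)) _.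
  by rewrite ltNge.
- by move: jm; rewrite leqNgt mlj.
- have Cv : Cij i j = -1 :> R by rewrite /Cij /= -ejm ltnn.
  rewrite Cv mulN1r opprK; exact: corA.
Qed.

Lemma argmin_opp (R : realFieldType) n (y th : 'I_n.+1 -> R) lam :
  fl_argmin lam y th -> fl_argmin lam (fun k => - y k) (fun k => - th k).
Proof.
have E : forall z w : 'I_n.+1 -> R,
    fl_obj lam (fun k => - z k) (fun k => - w k) = fl_obj lam z w.
  move=> z w; rewrite /fl_obj; congr (_ * _ + _ * _).
    by apply: eq_bigr => k _; rewrite -opprD sqrrN.
  by apply: eq_bigr => k _; rewrite -opprD normrN.
have E' : forall z w : 'I_n.+1 -> R,
    fl_obj lam (fun k => - z k) w = fl_obj lam z (fun k => - w k).
  move=> z w; rewrite /fl_obj; congr (_ * _ + _ * _).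
    by apply: eq_bigr => k _; rewrite -sqrrN; congr (_ ^+ 2); ring.
  by apply: eq_bigr => k _; rewrite -normrN; congr (Num.norm _); ring.
by move=> H th'; rewrite E E'; apply: H.
Qed.

Lemma tail_avg_opp (R : realFieldType) n (y : 'I_n.+1 -> R) i :
  tail_avg (fun k => - y k) i = - tail_avg y i.
Proof. by rewrite /tail_avg sumrN mulNr. Qed.

Lemma max_from_ge (R : realFieldType) n (j i : 'I_n.+1) (F : 'I_n.+1 -> R) :
  (j <= i)%N -> F i <= max_from j F.
Proof.
rewrite /max_from => ji.
have : i \in index_enum 'I_n.+1 by rewrite mem_index_enum.
elim: (index_enum _) => // a r IH; rewrite inE big_cons => /orP [/eqP<- | ir].
  by rewrite ji le_max lexx.
case: (j <= a)%N; last exact: IH.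
by rewrite le_max IH ?orbT.
Qed.

Lemma min_from_le (R : realFieldType) n (j i : 'I_n.+1) (F : 'I_n.+1 -> R) :
  (j <= i)%N -> min_from j F <= F i.
Proof.
rewrite /min_from => ji.
have : i \in index_enum 'I_n.+1 by rewrite mem_index_enum.
elim: (index_enum _) => // a r IH; rewrite inE big_cons => /orP [/eqP<- | ir].
  by rewrite ji ge_min lexx.
case: (j <= a)%N; last exact: IH.
by rewrite ge_min IH ?orbT.
Qed.

Unset Implicit Arguments.
Theorem theorem9 (R : realFieldType) (n : nat) (y : 'I_n.+1 -> R) (lam : R)
  (hlam : 0 <= lam) (th : 'I_n.+1 -> R) (hth : fl_argmin lam y th) :
  max_all (fun j => min_from j (fun i =>
     tail_avg y i + Cij i j * lam / (n.+1 - i)%:R)) <= th ord_max /\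
  th ord_max <= min_all (fun j => max_from j (fun i =>
     tail_avg y i - Cij i j * lam / (n.+1 - i)%:R)).
Proof.
split.
  apply: max_all_le => j.
  have [i ji hi] := lower hlam hth j.
  apply: le_trans hi; exact: min_from_le.
apply: min_all_ge => j.
have [i ji hi] := lower hlam (argmin_opp hth) j.
apply: (@le_trans _ _ (tail_avg y i - Cij i j * lam / (n.+1 - i)%:R)).
  move: hi; rewrite tail_avg_opp /=; lra.
exact: max_from_ge.
Qed.
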